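(* Let $n\ge 3$ be an integer and let $C_n$ be the cycle with $n$ vertices. Then \[ \Theta(C_n)=\begin{cases} 1 & \text{if } n=3,\\ 2 & \text{if } n=4,\\ 4 & \text{if } n\ge 5.\end{cases}\]
   Context: All graphs are finite and simple. Let $k$ be a positive integer. A graph $G=(V,E)$ is a $k$-threshold graph with thresholds $\theta_1<\theta_2<\dots<\theta_k$ (real numbers) if there is a map $r:V\to\mathbb{R}$ such that for all distinct $u,v\in V$: $uv\in E$ if and only if the inequality $\theta_i\le r(u)+r(v)$ holds for an odd number of indices $i\in\{1,\dots,k\}$. Such a map $r$ is called a $(\theta_1,\dots,\theta_k)$-representation of $G$. The threshold number $\Theta(G)$ is the smallest positive integer $k$ such that $G$ is a $k$-threshold graph (for some choice of thresholds $\theta_1<\dots<\theta_k$). *)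

(* Defs.v *)
From mathcomp Require Import all_boot all_order all_algebra.
From mathcomp Require Import Rstruct.
From Stdlib Require Import Rdefinitions.
Set Implicit Arguments. Unset Strict Implicit. Unset Printing Implicit Defensive.
Import Order.TTheory GRing.Theory Num.Theory.
Local Open Scope ring_scope.

Definition simple_graph (V : finType) (adj : rel V) : Prop :=
  symmetric adj /\ irreflexive adj.

Definition cycle_adj (n : nat) : rel 'I_n :=
  fun i j => [&& i != j & [|| nat_of_ord j == modn (nat_of_ord i).+1 n | nat_of_ord i == modn (nat_of_ord j).+1 n]].

Definition strictly_increasing (k : nat) (theta : nat -> R) : Prop :=
  forall i j : nat, ltn i j -> ltn j k -> theta i < theta j.

Definition is_representation (V : finType) (adj : rel V) (k : nat)
    (theta : nat -> R) (r : V -> R) : Prop :=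
  forall u v : V, u != v ->
    adj u v = odd #|[set i : 'I_k | theta i <= r u + r v]|.

Definition is_k_threshold (V : finType) (adj : rel V) (k : nat) : Prop :=
  exists theta : nat -> R, strictly_increasing k theta /\
    exists r : V -> R, is_representation adj k theta r.

Definition threshold_number_is (V : finType) (adj : rel V) (t : nat) : Prop :=
  ltn 0 t /\ is_k_threshold adj t /\
  forall k : nat, ltn 0 k -> is_k_threshold adj k -> leq t k.

(* Main.v *)
Require Import Defs.
From mathcomp Require Import all_boot all_order all_algebra.
From mathcomp Require Import Rstruct.
From mathcomp Require Import lra zify.
From Stdlib Require Import Rdefinitions.
Set Implicit Arguments. Unset Strict Implicit. Unset Printing Implicit Defensive.
Import Order.TTheory GRing.Theory Num.Theory.
Local Open Scope ring_scope.

Lemma card_sum k (P : 'I_k -> bool) :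
  #|[set i : 'I_k | P i]| = (\sum_(i < k) nat_of_bool (P i))%N.
Proof. rewrite -sum1_card big_mkcond /=. apply: eq_bigr => i _. by rewrite inE; case: (P i). Qed.

Lemma cnt1 (t : nat -> R) s :
  odd #|[set i : 'I_1 | t i <= s]| = (t 0%N <= s).
Proof. rewrite card_sum !big_ord_recr big_ord0 /=. by case: (t 0%N <= s). Qed.

Lemma cnt2 (t : nat -> R) s : t 0%N < t 1%N ->
  odd #|[set i : 'I_2 | t i <= s]| = (t 0%N <= s) && (s < t 1%N).
Proof.
move=> h1; rewrite card_sum !big_ord_recr big_ord0 /=.
case: (lerP (t 0%N) s); case: (lerP (t 1%N) s) => //= *; lra.
Qed.

Lemma cnt3 (t : nat -> R) s : t 0%N < t 1%N -> t 1%N < t 2%N ->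
  odd #|[set i : 'I_3 | t i <= s]| = ((t 0%N <= s) && (s < t 1%N)) || (t 2%N <= s).
Proof.
move=> h1 h2; rewrite card_sum !big_ord_recr big_ord0 /=.
case: (lerP (t 0%N) s); case: (lerP (t 1%N) s); case: (lerP (t 2%N) s) => //= *; lra.
Qed.

Lemma cnt4 (t : nat -> R) s : t 0%N < t 1%N -> t 1%N < t 2%N -> t 2%N < t 3%N ->
  odd #|[set i : 'I_4 | t i <= s]| =
  ((t 0%N <= s) && (s < t 1%N)) || ((t 2%N <= s) && (s < t 3%N)).
Proof.
move=> h1 h2 h3; rewrite card_sum !big_ord_recr big_ord0 /=.
case: (lerP (t 0%N) s); case: (lerP (t 1%N) s); case: (lerP (t 2%N) s);
  case: (lerP (t 3%N) s) => //= *; lra.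
Qed.

Lemma ex_max (V : finType) (r : V -> R) (v0 : V) : exists x, forall y, r y <= r x.
Proof. case: (@arg_maxP _ _ V v0 xpredT r isT) => x _ hx. by exists x => y; apply: hx. Qed.

Lemma ex_min (V : finType) (r : V -> R) (v0 : V) : exists x, forall y, r x <= r y.
Proof. case: (@arg_minP _ _ V v0 xpredT r isT) => x _ hx. by exists x => y; apply: hx. Qed.

Local Close Scope ring_scope.
Local Open Scope ring_scope.

Record Gok (V : finType) (adj : rel V) : Prop := {
  gsym : forall u v, adj u v = adj v u;
  girr : forall u, adj u u = false;
  gnb : forall u, exists a b, [/\ a != b, adj u a, adj u b &
                     forall w, adj u w -> w = a \/ w = b];
  gtri : forall a b c, adj a b -> adj b c -> adj c a -> False;
  gsq : forall a b c d, a != c -> b != d -> adj a b -> adj b c -> adj c d -> adj d a -> False;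
  gnon : forall u, exists w, w != u /\ ~~ adj u w }.

Lemma adj_neq (V : finType) (adj : rel V) (G : Gok adj) u v : adj u v -> u != v.
Proof. by apply: contraTneq => ->; rewrite (girr G). Qed.

Lemma nbr_avoid (V : finType) (adj : rel V) (G : Gok adj) y z :
  exists w, adj y w /\ w != z.
Proof.
have [a [b [hab ha hb _]]] := gnb G y.
case: (eqVneq a z) => [eaz|naz]; last by exists a.
by exists b; split => //; rewrite -eaz eq_sym.
Qed.

Lemma other_nbr (V : finType) (adj : rel V) (G : Gok adj) u v : adj u v ->
  exists v2, [/\ v2 != v, adj u v2 & forall w, adj u w -> w = v \/ w = v2].
Proof.
move=> huv; have [a [b [hab ha hb hN]]] := gnb G u.
case: (hN v huv) => e; subst v.
- by exists b; split => //; rewrite eq_sym.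
- exists a; split => // w /hN []; auto.
Qed.

Lemma k2_false (V : finType) (adj : rel V) (G : Gok adj) (v0 : V) (r : V -> R) (t1 t2 : R)
  (REP : forall u v, u != v -> adj u v = (t1 <= r u + r v) && (r u + r v < t2)) : False.
Proof.
have [x hx] := ex_max r v0.
have [m hm] := ex_min r v0.
have Eadj : forall u v, adj u v -> t1 <= r u + r v /\ r u + r v < t2.
  move=> u v h; have := REP u v (adj_neq G h); rewrite h => /esym/andP[] //.
have Enon : forall u v, u != v -> ~~ adj u v -> r u + r v < t1 \/ t2 <= r u + r v.
  move=> u v nuv h; have := REP u v nuv; rewrite (negbTE h) => /esym/negbT.
  case: (lerP t1 (r u + r v)) => h1 /=; [rewrite -leNgt => ?; by right | by left].
have hA : forall u, u != x -> ~~ adj x u -> t2 <= r x + r u.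
  move=> u nux nadj; have [w [huw _]] := nbr_avoid G u u.
  have [h1 _] := Eadj _ _ huw; have := hx w.
  have nxu : x != u by rewrite eq_sym.
  case: (Enon x u nxu nadj) => // h hw; lra.
have hB : forall u, u != m -> ~~ adj m u -> r m + r u < t1.
  move=> u num nadj; have [w [huw _]] := nbr_avoid G u u.
  have [_ h1] := Eadj _ _ huw; have := hm w.
  have nmu : m != u by rewrite eq_sym.
  case: (Enon m u nmu nadj) => // h hw; lra.
have hX : forall a w, adj x a -> w != x -> ~~ adj x w -> r a < r w.
  move=> a w ha nwx nxw; have [_ h] := Eadj _ _ ha; have := hA w nwx nxw; lra.
have hM : forall a w, adj m a -> w != m -> ~~ adj m w -> r w < r a.
  move=> a w ha nwm nmw; have [h _] := Eadj _ _ ha; have := hB w nwm nmw; lra.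
have hxm : adj x m.
  apply/negP => nxm; have [a [b [hab ha hb _]]] := gnb G x.
  case: (eqVneq m x) => [emx|nmx].
  - have [w [nwx nxw]] := gnon G x. have := hX a w ha nwx nxw.
    have := hm a; have := hx w; subst m; lra.
  - have := hX a m ha nmx (introN idP nxm); have := hm a; lra.
have hmx : adj m x by rewrite (gsym G).
have [x2 [nx2m hxx2 hxN]] := other_nbr G hxm.
have [m2 [nm2x hmm2 hmN]] := other_nbr G hmx.
have nmx : m != x by rewrite eq_sym (adj_neq G hxm).
have nm2x2 : m2 != x2.
  apply/eqP => e; subst m2; apply: (gtri G hxm hmm2); by rewrite (gsym G).
have nxm2 : ~~ adj x m2.
  apply/negP => h; case: (hxN _ h) => e.
  - by move: hmm2; rewrite e (girr G).
  - by rewrite e eqxx in nm2x2.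
have F1 : forall u, u != x -> u != m -> u != x2 -> r x2 < r u.
  move=> u nux num nux2; apply: hX hxx2 nux _.
  apply/negP => h; case: (hxN _ h) => e; by [rewrite e eqxx in num | rewrite e eqxx in nux2].
have F2 : forall u, u != m -> u != x -> u != m2 -> r u < r m2.
  move=> u num nux num2; apply: hM hmm2 num _.
  apply/negP => h; case: (hmN _ h) => e; by [rewrite e eqxx in nux | rewrite e eqxx in num2].
have hm2m : adj m2 m by rewrite (gsym G).
have [z [nzm hm2z hm2N]] := other_nbr G hm2m.
have D : forall y, y != m2 -> ~~ adj m2 y -> t2 <= r m2 + r y.
  move=> y ny nadj; have nm2y : m2 != y by rewrite eq_sym.
  case: (Enon m2 y nm2y nadj) => // h; exfalso.
  have [w [hyw nwx]] := nbr_avoid G y x.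
  have nwm2 : w != m2.
    apply/eqP => e; subst w; by rewrite (gsym G) hyw in nadj.
  have hw : r w <= r m2.
    case: (eqVneq w m) => [->|nwm]; [exact: hm | exact: ltW (F2 w nwm nwx nwm2)].
  have [h1 _] := Eadj _ _ hyw; lra.
have nzx : z != x.
  apply/eqP => e; subst z; by rewrite (gsym G) hm2z in nxm2.
case: (eqVneq z x2) => [ezx2|nzx2].
- subst z. apply: (gsq G (a:=x) (b:=m) (c:=m2) (d:=x2)) => //.
  + by rewrite eq_sym.
  + by rewrite eq_sym.
  + by rewrite (gsym G).
- have nadj : ~~ adj m2 x2.
    apply/negP => h; case: (hm2N _ h) => e; by [rewrite e eqxx in nx2m | rewrite e eqxx in nzx2].
  have nx2m2 : x2 != m2 by rewrite eq_sym.
  have h := D x2 nx2m2 nadj. have [_ h2] := Eadj _ _ hm2z.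
  have := F1 z nzx nzm nzx2; lra.
Qed.

Local Close Scope ring_scope.
Local Open Scope ring_scope.

Lemma k3_false (V : finType) (adj : rel V) (G : Gok adj) (v0 : V) (r : V -> R) (t1 t2 t3 : R)
  (h12 : t1 < t2) (h23 : t2 < t3)
  (REP : forall u v, u != v -> adj u v =
     ((t1 <= r u + r v) && (r u + r v < t2)) || (t3 <= r u + r v)) : False.
Proof.
have [x hx] := ex_max r v0.
have Eadj3 : forall u v, adj u v -> (t1 <= r u + r v /\ r u + r v < t2) \/ t3 <= r u + r v.
  move=> u v h; have := REP u v (adj_neq G h); rewrite h => /esym/orP[/andP[]|]; auto.
have Eadj1 : forall u v, adj u v -> t1 <= r u + r v.
  move=> u v /Eadj3 [[]|] *; lra.
have Enon3 : forall u v, u != v -> ~~ adj u v ->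
    r u + r v < t1 \/ (t2 <= r u + r v /\ r u + r v < t3).
  move=> u v nuv h; have := REP u v nuv; rewrite (negbTE h) => /esym/negbT.
  rewrite negb_or negb_and -!ltNge -!leNgt => /andP[/orP [h1|h1] h2]; auto.
have H' : forall u v, adj u v -> t3 <= r u + r v -> u = x \/ v = x.
  move=> u v huv h.
  case: (eqVneq u x) => [->|nux]; [by left|].
  case: (eqVneq v x) => [->|nvx]; [by right|]. exfalso.
  have hxu : adj x u.
    rewrite REP; last by rewrite eq_sym. apply/orP; right; have := hx v; lra.
  have hvx : adj v x.
    rewrite REP //. apply/orP; right; have := hx u; lra.
  exact: (gtri G hxu huv hvx).
have hA3 : forall u, u != x -> ~~ adj x u -> t2 <= r x + r u /\ r x + r u < t3.
  move=> u nux nadj; have [w [huw _]] := nbr_avoid G u u.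
  have h1 := Eadj1 _ _ huw; have := hx w.
  have nxu : x != u by rewrite eq_sym.
  case: (Enon3 x u nxu nadj) => // h hw; lra.
have minlow : forall v, (forall w, r v <= r w) ->
    forall y, y != v -> y != x -> ~~ adj v y -> r v + r y < t1.
  move=> v hv y nyv nyx nadj.
  have nvy : v != y by rewrite eq_sym.
  case: (Enon3 v y nvy nadj) => // [[h1 h2]]; exfalso.
  have [w [hyw nwx]] := nbr_avoid G y x.
  case: (Eadj3 _ _ hyw) => [[_ hlt]|hge].
  - have := hv w; lra.
  - case: (H' y w hyw hge) => e; by [rewrite e eqxx in nyx | rewrite e eqxx in nwx].
have [a [b [hab ha hb hN]]] := gnb G x.
have HL : forall a b, a != b -> adj x a -> adj x b ->
    (forall w, adj x w -> w = a \/ w = b) -> t3 <= r x + r a -> r x + r b < t2 -> False.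
  move=> {a b hab ha hb hN} a b hab ha hb hN ha3 hb2.
  have X3 : forall w, w != x -> w != a -> w != b -> r b < r w /\ r w < r a.
    move=> w nwx nwa nwb.
    have nadj : ~~ adj x w.
      apply/negP => h; case: (hN w h) => e; by [rewrite e eqxx in nwa | rewrite e eqxx in nwb].
    have := hA3 w nwx nadj; lra.
  have Min : forall w, r b <= r w.
    move=> w; case: (eqVneq w b) => [->|nwb]; first lra.
    case: (eqVneq w a) => [->|nwa]; first lra.
    case: (eqVneq w x) => [->|nwx]; first exact: hx.
    have := X3 w nwx nwa nwb; lra.
  have hbx : adj b x by rewrite (gsym G).
  have [c [ncx hbc hbN]] := other_nbr G hbx.
  case: (eqVneq c a) => [eca|nca].
  - subst c. apply: (gtri G ha _ hbx). by rewrite (gsym G).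
  - have nxa := adj_neq G ha.
    have nadjba : ~~ adj b a.
      apply/negP => h; case: (hbN a h) => e; by [rewrite e eqxx in nxa | rewrite e eqxx in nca].
    have nab : a != b by [].
    have nax : a != x by rewrite eq_sym.
    have := minlow b Min a nab nax nadjba. have := Eadj1 _ _ hbc.
    have ncb : c != b by rewrite eq_sym (adj_neq G hbc).
    have := X3 c ncx nca ncb; lra.
have HH : forall a b, a != b -> adj x a -> adj x b ->
    (forall w, adj x w -> w = a \/ w = b) -> t3 <= r x + r a -> t3 <= r x + r b ->
    r b <= r a -> False.
  move=> {a b hab ha hb hN HL} a b hab ha hb hN ha3 hb3 hba.
  have X3 : forall w, w != x -> w != a -> w != b -> r w < r b.
    move=> w nwx nwa nwb.
    have nadj : ~~ adj x w.
      apply/negP => h; case: (hN w h) => e; by [rewrite e eqxx in nwa | rewrite e eqxx in nwb].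
    have := hA3 w nwx nadj; lra.
  have hax : adj a x by rewrite (gsym G).
  have [d [ndx had haN]] := other_nbr G hax.
  have ndb : d != b.
    apply/eqP => e; subst d; apply: (gtri G ha had); by rewrite (gsym G).
  have nxb := adj_neq G hb.
  have nadjab : ~~ adj a b.
    apply/negP => h; case: (haN b h) => e; by [rewrite e eqxx in nxb | rewrite e eqxx in ndb].
  have Da : forall y, y != a -> ~~ adj a y -> t2 <= r a + r y.
    move=> y nya nadj. have nay : a != y by rewrite eq_sym.
    case: (Enon3 a y nay nadj) => [hlow|[]] //; exfalso.
    have [w [hyw nwx]] := nbr_avoid G y x.
    have nwa : w != a.
      apply/eqP => e; subst w; by rewrite (gsym G) hyw in nadj.
    have hw : r w <= r a.
      case: (eqVneq w b) => [->|nwb] //. have := X3 w nwx nwa nwb; lra.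
    have := Eadj1 _ _ hyw; lra.
  have hadlow : r a + r d < t2.
    case: (Eadj3 _ _ had) => [[_ h]|h] //. case: (H' a d had h) => e.
    - by move: ha; rewrite -e (girr G).
    - by rewrite e eqxx in ndx.
  have hdlt : forall y, y != a -> ~~ adj a y -> r d < r y.
    move=> y nya nadj; have := Da y nya nadj; lra.
  have nxd : ~~ adj x d.
    apply/negP => h; case: (hN d h) => e.
    - by move: had; rewrite e (girr G).
    - by rewrite e eqxx in ndb.
  have hdb : r d < r b.
    have nba : b != a by rewrite eq_sym.
    exact: hdlt b nba nadjab.
  have Min : forall w, r d <= r w.
    move=> w; case: (eqVneq w d) => [->|nwd]; first lra.
    case: (eqVneq w a) => [->|nwa]; first lra.
    case: (eqVneq w x) => [->|nwx]; first by have := hx b; lra.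
    have nadj : ~~ adj a w.
      apply/negP => h; case: (haN w h) => e; by [rewrite e eqxx in nwx | rewrite e eqxx in nwd].
    have := hdlt w nwa nadj; lra.
  have hda : adj d a by rewrite (gsym G).
  have [e [nea hde hdN]] := other_nbr G hda.
  have nex : e != x.
    apply/eqP => ee; subst e; by rewrite (gsym G) hde in nxd.
  case: (eqVneq e b) => [eeb|neb].
  - subst e. apply: (gsq G (a:=x) (b:=a) (c:=d) (d:=b)) => //.
    + by rewrite eq_sym.
    + by rewrite (gsym G).
  - have nadjdb : ~~ adj d b.
      apply/negP => h; case: (hdN b h) => ee.
      + by rewrite ee eqxx in hab.
      + by rewrite ee eqxx in neb.
    have nbd : b != d by rewrite eq_sym.
    have nbx : b != x by rewrite eq_sym.
    have := minlow d Min b nbd nbx nadjdb. have := Eadj1 _ _ hde.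
    have := X3 e nex nea neb; lra.
case: (Eadj3 _ _ ha) => [[ha1 ha2]|ha3]; case: (Eadj3 _ _ hb) => [[hb1 hb2]|hb3].
- apply: (k2_false G v0 (r:=r) (t1:=t1) (t2:=t2)) => u v nuv.
  rewrite REP //.
  suff hlt : r u + r v < t3.
    by rewrite (_ : (t3 <= _) = false) ?orbF //; apply/negbTE; rewrite -ltNge.
  case: (eqVneq u x) => [eu|nux].
    subst u. case: (boolP (adj x v)) => h.
      case: (hN v h) => ->; lra.
    have nvx : v != x by rewrite eq_sym.
    have := hA3 v nvx h; lra.
  case: (eqVneq v x) => [ev|nvx].
    subst v. case: (boolP (adj x u)) => h.
      case: (hN u h) => ->; lra.
    have := hA3 u nux h; lra.
  rewrite ltNge; apply/negP => h.
  have hadj : adj u v by rewrite REP // h orbT.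
  case: (H' u v hadj h) => e; by [rewrite e eqxx in nux | rewrite e eqxx in nvx].
- apply: (HL b a _ hb ha _ hb3 ha2); [by rewrite eq_sym | move=> w /hN []; auto].
- exact: (HL a b hab ha hb hN ha3 hb2).
- case: (lerP (r b) (r a)) => h.
  + exact: (HH a b hab ha hb hN ha3 hb3 h).
  + apply: (HH b a _ hb ha _ hb3 ha3 (ltW h)); [by rewrite eq_sym | move=> w /hN []; auto].
Qed.

Local Close Scope ring_scope.

Lemma cadjE n (hn : 3 <= n) (i j : 'I_n) : cycle_adj i j =
  ((i : nat) != j) && [|| (j : nat) == i.+1, (i : nat) == j.+1,
     ((i.+1 == n) && (j == 0 :> nat)) | ((j.+1 == n) && (i == 0 :> nat))].
Proof.
rewrite /cycle_adj -val_eqE /=.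
have hi := ltn_ord i; have hj := ltn_ord j.
have mS : forall k, k < n -> k.+1 %% n = if k.+1 == n then 0 else k.+1.
  move=> k hk; case: eqP => [->|h]; [exact: modnn | apply: modn_small; lia].
rewrite !mS //; case: ifP => h1; case: ifP => h2; lia.
Qed.



Definition sc n (u : 'I_n.+1) : 'I_n.+1 := inord (if (u : nat) == n then 0 else u.+1).
Definition pr n (u : 'I_n.+1) : 'I_n.+1 := inord (if (u : nat) == 0 then n else u.-1).

Lemma scE n (u : 'I_n.+1) :
  ((u : nat) = n /\ (sc u : nat) = 0) \/ ((u : nat) < n /\ (sc u : nat) = u.+1).
Proof. have hu := ltn_ord u. rewrite /sc; case: ifP => h; rewrite inordK; lia. Qed.

Lemma prE n (u : 'I_n.+1) :
  ((u : nat) = 0 /\ (pr u : nat) = n) \/ (0 < (u : nat) /\ (pr u : nat) = u.-1).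
Proof. have hu := ltn_ord u. rewrite /pr; case: ifP => h; rewrite inordK; lia. Qed.

Lemma pr_sc n (u : 'I_n.+1) : pr (sc u) = u.
Proof. apply: val_inj => /=; have := ltn_ord u; have := scE u; have := prE (sc u); lia. Qed.

Lemma sc_pr n (u : 'I_n.+1) : sc (pr u) = u.
Proof. apply: val_inj => /=; have := ltn_ord u; have := prE u; have := scE (pr u); lia. Qed.

Lemma nbrE n (c3 : 3 <= n.+1) (u w : 'I_n.+1) : cycle_adj u w -> w = sc u \/ w = pr u.
Proof.
rewrite (cadjE c3) => h; have := scE u; have := prE u; have := ltn_ord w; have := ltn_ord u.
move=> hu hw hp hs.
have : (w : nat) = sc u \/ (w : nat) = pr u by lia.
by case=> e; [left|right]; apply: val_inj.
Qed.

Lemma adj_sc n (c3 : 3 <= n.+1) (u : 'I_n.+1) : cycle_adj u (sc u).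
Proof. rewrite (cadjE c3); have := scE u; lia. Qed.

Lemma adj_pr n (c3 : 3 <= n.+1) (u : 'I_n.+1) : cycle_adj u (pr u).
Proof. rewrite (cadjE c3); have := prE u; lia. Qed.

Lemma adj_sym n (c3 : 3 <= n.+1) (u v : 'I_n.+1) : cycle_adj u v -> cycle_adj v u.
Proof.
case/(nbrE c3) => ->.
- rewrite -{2}[u]pr_sc; exact: adj_pr.
- rewrite -{2}[u]sc_pr; exact: adj_sc.
Qed.

Lemma no_sc_pr n (hn : 4 <= n) (u : 'I_n.+1) : ~ cycle_adj (sc u) (pr u).
Proof.
have c3 : 3 <= n.+1 by lia.
case/(nbrE c3); rewrite ?pr_sc => /(congr1 val) /=;
  have := scE u; have := prE u; have := scE (sc u); lia.
Qed.

Lemma sq_aux n (hn : 4 <= n) (a c : 'I_n.+1) :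
  c != a -> cycle_adj (sc a) c -> cycle_adj c (pr a) -> False.
Proof.
have c3 : 3 <= n.+1 by lia.
move=> nca hsc; move: nca; case/(nbrE c3): hsc => -> nca h.
- case/(nbrE c3): h; rewrite ?pr_sc => /(congr1 val) /=.
  + have := scE a; have := prE a; have := scE (sc a); have := scE (sc (sc a)); lia.
  + have := scE a; have := prE a; lia.
- by rewrite pr_sc eqxx in nca.
Qed.

Lemma cyc_ok n : 4 <= n -> Gok (@cycle_adj n.+1).
Proof.
move=> hn; have c3 : 3 <= n.+1 by lia.
have girr' : forall u : 'I_n.+1, cycle_adj u u = false.
  move=> u; rewrite (cadjE c3); lia.
split.
- move=> u v; apply/idP/idP; exact: adj_sym.
- exact: girr'.
- move=> u; exists (sc u), (pr u); split.
  + rewrite -val_eqE /=; have := scE u; have := prE u; lia.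
  + exact: adj_sc.
  + exact: adj_pr.
  + move=> w; exact: nbrE.
- move=> a b c hab hbc hca; have hac := adj_sym c3 hca; move: hbc.
  case/(nbrE c3): hab => ->; case/(nbrE c3): hac => ->.
  + by rewrite girr'.
  + exact: no_sc_pr.
  + by move/(adj_sym c3); apply: no_sc_pr.
  + by rewrite girr'.
- move=> a b c d nac nbd hab hbc hcd hda.
  have had := adj_sym c3 hda.
  have nca : c != a by rewrite eq_sym.
  move: hbc nbd; case/(nbrE c3): hab => -> hbc nbd.
  + move: hcd nbd; case/(nbrE c3): had => -> hcd nbd.
    * by rewrite eqxx in nbd.
    * exact: (sq_aux hn nca hbc hcd).
  + move: hcd nbd; case/(nbrE c3): had => -> hcd nbd.
    * exact: (sq_aux hn nca (adj_sym c3 hcd) (adj_sym c3 hbc)).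
    * by rewrite eqxx in nbd.
- move=> u. have hu := ltn_ord u.
  pose w := if nat_of_ord u <= 1 then nat_of_ord u + 2 else nat_of_ord u - 2.
  have hw : (nat_of_ord u <= 1 /\ w = nat_of_ord u + 2) \/ (1 < nat_of_ord u /\ w = nat_of_ord u - 2).
    rewrite /w; case: ifP => h; lia.
  have ew : ((inord w : 'I_n.+1) : nat) = w by rewrite inordK //; lia.
  exists (inord w); split.
  + rewrite -val_eqE /= ew; lia.
  + rewrite (cadjE c3) ew; lia.
Qed.


Local Open Scope ring_scope.
Lemma not1 n : (3 <= n)%nat -> ~ is_k_threshold (@cycle_adj n.+1) 1.
Proof.
move=> hn [t [_ [r hr]]]; have c3 : (3 <= n.+1)%nat by lia.
have e0 : ((inord 0 : 'I_n.+1) : nat) = 0 by rewrite inordK //; lia.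
have e1 : ((inord 1 : 'I_n.+1) : nat) = 1 by rewrite inordK //; lia.
have e2 : ((inord 2 : 'I_n.+1) : nat) = 2 by rewrite inordK //; lia.
have e3 : ((inord 3 : 'I_n.+1) : nat) = 3 by rewrite inordK //; lia.
have E : forall u v : 'I_n.+1, nat_of_ord u != val v ->
    cycle_adj u v = (t O <= r u + r v).
  move=> u v h; rewrite -cnt1; apply: hr; by rewrite -val_eqE.
have h01 : (t O <= r (inord O) + r (inord 1%nat)).
  rewrite -E /= ?e0 ?e1 // (cadjE c3) e0 e1; lia.
have h23 : (t O <= r (inord 2%nat) + r (inord 3%nat)).
  rewrite -E /= ?e2 ?e3 // (cadjE c3) e2 e3; lia.
have h02 : (r (inord O) + r (inord 2%nat) < t O).
  rewrite ltNge -E /= ?e0 ?e2 // (cadjE c3) e0 e2; lia.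
have h13 : (r (inord 1%nat) + r (inord 3%nat) < t O).
  rewrite ltNge -E /= ?e1 ?e3 // (cadjE c3) e1 e3; lia.
clear -h01 h23 h02 h13; lra.
Qed.

Local Close Scope ring_scope.
Local Open Scope ring_scope.

Definition zf (n i : nat) : int :=
  (if odd i then - Posz (2 * i)%nat else Posz (2 * i)%nat) + (if i == n then 1 else 0).
Definition Sf n := zf n n.
Definition tzf n (i : nat) : int :=
  if odd n then (match i with 0 => Sf n | 1 => Sf n + 1 | 2 => -2 | _ => 4 end)
  else (match i with 0 => -2 | 1 => 4 | 2 => Sf n | _ => Sf n + 1 end).

Lemma rep5 n : (4 <= n)%nat -> is_k_threshold (@cycle_adj n.+1) 4.
Proof.
move=> hn; have c3 : (3 <= n.+1)%nat by lia.
have hS : (odd n /\ Sf n = - Posz (2 * n)%nat + 1) \/ (~~ odd n /\ Sf n = Posz (2 * n)%nat + 1).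
  rewrite /Sf /zf eqxx; case: (odd n); [left|right]; split => //.
have zs : forall i, (i != n /\ odd i /\ zf n i = - Posz (2 * i)%nat)
    \/ (i != n /\ ~~ odd i /\ zf n i = Posz (2 * i)%nat)
    \/ (i = n /\ odd i /\ zf n i = - Posz (2 * i)%nat + 1)
    \/ (i = n /\ ~~ odd i /\ zf n i = Posz (2 * i)%nat + 1).
  move=> i; rewrite /zf; case: ifP => h1; case: ifP => h2; lia.
have hinc : strictly_increasing 4 (fun i => (tzf n i)%:~R).
  move=> i j hij hj; rewrite ltr_int /tzf.
  case: i hij => [|[|[|i]]] hij; case: j hj hij => [|[|[|[|j]]]] //= hj hij;
    case: (odd n) hS => hS; lia.
exists (fun i => (tzf n i)%:~R); split => //.
exists (fun i : 'I_n.+1 => (zf n i)%:~R) => u v nuv.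
rewrite (@cnt4 (fun i => (tzf n i)%:~R)); try exact: hinc.
rewrite -!intrD !ler_int !ltr_int (cadjE c3).
move: nuv; rewrite -val_eqE /= => nuv.
have hu := ltn_ord u; have hv := ltn_ord v.
rewrite /tzf; case hod: (odd n) => /=;
  (case: hS => [[ho ->]|[ho ->]]; try by rewrite hod in ho);
  (case: (zs u) => [[h1 [h2 ->]]|[[h1 [h2 ->]]|[[h1 [h2 ->]]|[h1 [h2 ->]]]]]);
  (case: (zs v) => [[h3 [h4 ->]]|[[h3 [h4 ->]]|[[h3 [h4 ->]]|[h3 [h4 ->]]]]]);
  apply/idP/idP => H;
  (try (move/andP: H => [H1 /or4P H2]; case: H2 => H2));
  (try (case/orP: H => /andP [H1 H2])); lia.
Qed.


Local Close Scope ring_scope.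
Local Open Scope ring_scope.

Lemma rep4 : is_k_threshold (@cycle_adj 4) 2.
Proof.
have hinc : strictly_increasing 2 (fun i => (i.+1)%:R : R).
  by move=> i j hij hj; rewrite ltr_nat.
exists (fun i => (i.+1)%:R); split => //.
exists (fun i : 'I_4 => (odd i)%:R) => u v nuv.
rewrite (@cnt2 (fun i => (i.+1)%:R)); last exact: hinc.
rewrite -natrD ler_nat ltr_nat (@cadjE 4 isT).
move: u v nuv => [[|[|[|[|u]]]] hu] [[|[|[|[|v]]]] hv] //= nuv;
  by rewrite ?ltnS ?ltn0 in hu hv.
Qed.

Lemma rep3 : is_k_threshold (@cycle_adj 3) 1.
Proof.
exists (fun _ => 0); split.
  by move=> i j /= hij hj; exfalso; lia.
exists (fun _ => 1) => u v nuv.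
rewrite (@cnt1 (fun _ => 0)) (@cadjE 3 isT).
have -> : (0 <= 1 + 1 :> R) = true by apply/idP; lra.
move: u v nuv => [[|[|[|u]]] hu] [[|[|[|v]]] hv] //= nuv;
  by rewrite ?ltnS ?ltn0 in hu hv.
Qed.


Local Close Scope ring_scope.
Local Open Scope ring_scope.

Delimit Scope nat_scope with N.

Theorem theorem1 (n : nat) (hn : (3 <= n)%N) :
  threshold_number_is (@cycle_adj n)
    (if n == 3 then 1 else if n == 4 then 2 else 4)%N.
Proof.
case: n hn => [|n] hn; first by [].
have [e2|ne2] := eqVneq n 2.
  subst n; split => //; split; [exact: rep3 | by move=> k hk _].
have [e3|ne3] := eqVneq n 3.
  subst n; split => //; split; first exact: rep4.
  case=> [|[|k]] // _ hth; exfalso; exact: (@not1 3 isT hth).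
have -> : (n.+1 == 3)%N = false by lia.
have -> : (n.+1 == 4)%N = false by lia.
have hn4 : (4 <= n)%N by lia.
split => //; split; first exact: rep5.
case=> [|[|[|[|k]]]] // _ hth; exfalso.
- exact: (@not1 n ltac:(lia) hth).
- case: hth => t [ht [r hr]].
  apply: (k2_false (cyc_ok hn4) ord0 (r:=r) (t1 := t 0%N) (t2 := t 1%N)) => u v nuv.
  by rewrite hr // cnt2 //; apply: ht.
- case: hth => t [ht [r hr]].
  apply: (k3_false (cyc_ok hn4) ord0 (r:=r) (t1 := t 0%N) (t2 := t 1%N) (t3 := t 2%N));
    try by apply: ht.
  move=> u v nuv; by rewrite hr // cnt3 //; apply: ht.
Qed.

Local Close Scope ring_scope.
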